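(* Let $\mathcal{H}$ be a separable infinite-dimensional complex Hilbert space, let $T\in\mathscr{B}(\mathcal{H})$ have dense range, let $x_0\in\mathcal{H}$ be nonzero and let $0<\varepsilon<\|x_0\|$. Set $$\mathcal{V}_{x_0,\varepsilon}:=\{x\in\mathcal{H}:\|x-x_0\|=\varepsilon\}\cap\{x\in\mathcal{H}:\|x\|\leqslant\sqrt{\|x_0\|^2-\varepsilon^2}\}.$$ Then $Ty_{x_0,\varepsilon}\in\mathcal{V}_{x_0,\varepsilon}$, and $\|y_{x_0,\varepsilon}\|\leqslant\|y\|$ for every $y\in\mathcal{H}$ with $Ty\in\mathcal{V}_{x_0,\varepsilon}$; i.e. $y_{x_0,\varepsilon}$ is the vector of smallest norm whose image under $T$ lies in $\mathcal{V}_{x_0,\varepsilon}$.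
   Context: For $T\in\mathscr{B}(\mathcal{H})$ with dense range, $x_0\neq 0$ and $0<\varepsilon<\|x_0\|$, the extremal vector $y_{x_0,\varepsilon}$ is the unique vector $y_0\in\mathcal{H}$ with $\|Ty_0-x_0\|\leqslant\varepsilon$ and $\|y_0\|=\inf\{\|y\|:\|Ty-x_0\|\leqslant\varepsilon\}$. *)

(* Defs.v *)
From mathcomp Require Import all_boot all_order all_algebra.
From mathcomp Require Export complex.
From mathcomp Require Export reals.
Set Implicit Arguments. Unset Strict Implicit. Unset Printing Implicit Defensive.
Import Order.TTheory GRing.Theory Num.Theory.
Local Open Scope ring_scope.
Local Open Scope complex_scope.

Section Hilbert.
Variables (R : realType) (H : lmodType R[i]) (ip : H -> H -> R[i]).

Record is_inner_product : Prop := {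
  ip_linl : forall (a : R[i]) (x y z : H), ip (a *: x + y) z = a * ip x z + ip y z;
  ip_sym  : forall x y : H, ip y x = (ip x y)^*;
  ip_pos  : forall x : H, 0 <= complex.Re (ip x x);
  ip_def  : forall x : H, ip x x = 0 -> x = 0 }.

Definition hnorm (x : H) : R := Num.sqrt (complex.Re (ip x x)).

Definition hcauchy (u : nat -> H) : Prop :=
  forall e : R, 0 < e -> exists N : nat, forall m n : nat,
    (N <= m)%N -> (N <= n)%N -> hnorm (u m - u n) < e.

Definition hconverges (u : nat -> H) (l : H) : Prop :=
  forall e : R, 0 < e -> exists N : nat, forall n : nat,
    (N <= n)%N -> hnorm (u n - l) < e.

Definition hcomplete : Prop :=
  forall u : nat -> H, hcauchy u -> exists l : H, hconverges u l.

Definition hseparable : Prop :=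
  exists d : nat -> H, forall (x : H) (e : R), 0 < e ->
    exists n : nat, hnorm (x - d n) < e.

Definition lin_indep (n : nat) (v : 'I_n -> H) : Prop :=
  forall c : 'I_n -> R[i], \sum_(i < n) c i *: v i = 0 -> forall i, c i = 0.

Definition infinite_dimensional : Prop :=
  forall n : nat, exists v : 'I_n -> H, lin_indep v.

Record sep_inf_dim_hilbert : Prop := {
  hs_ip : is_inner_product;
  hs_complete : hcomplete;
  hs_separable : hseparable;
  hs_infdim : infinite_dimensional }.

Definition bounded_operator (T : H -> H) : Prop :=
  (forall (a : R[i]) (x y : H), T (a *: x + y) = a *: T x + T y) /\
  exists M : R, forall x : H, hnorm (T x) <= M * hnorm x.

Definition dense_range (T : H -> H) : Prop :=
  forall (x : H) (e : R), 0 < e -> exists y : H, hnorm (T y - x) < e.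

(* y0 is the extremal vector y_{x0,eps}: ||T y0 - x0|| <= eps and
   ||y0|| = inf { ||y|| : ||T y - x0|| <= eps } (written out). *)
Definition extremal_vector (T : H -> H) (x0 : H) (eps : R) (y0 : H) : Prop :=
  hnorm (T y0 - x0) <= eps /\
  forall y : H, hnorm (T y - x0) <= eps -> hnorm y0 <= hnorm y.

Definition in_V (x0 : H) (eps : R) (x : H) : Prop :=
  hnorm (x - x0) = eps /\ hnorm x <= Num.sqrt (hnorm x0 ^+ 2 - eps ^+ 2).

End Hilbert.

(* Main.v *)
Require Import Defs.
From mathcomp Require Import all_boot all_order all_algebra complex reals.
From mathcomp Require Import ring lra.
Import Order.TTheory GRing.Theory Num.Theory.
Set Implicit Arguments. Unset Strict Implicit. Unset Printing Implicit Defensive.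
Local Open Scope ring_scope.
Local Open Scope complex_scope.

Section L.
Variables (R : realType) (H : lmodType R[i]) (ip : H -> H -> R[i]).
Hypothesis hip : is_inner_product ip.

Lemma ip0l z : ip 0 z = 0.
Proof.
by have := ip_linl hip (-1) 0 0 z; rewrite scaler0 addr0 mulN1r addNr.
Qed.
Lemma ipDl x y z : ip (x + y) z = ip x z + ip y z.
Proof. by have := ip_linl hip 1 x y z; rewrite scale1r mul1r. Qed.
Lemma ipZl a x z : ip (a *: x) z = a * ip x z.
Proof. by have := ip_linl hip a x 0 z; rewrite addr0 ip0l addr0. Qed.
Lemma ipDr x y z : ip z (x + y) = ip z x + ip z y.
Proof. by rewrite (ip_sym hip) ipDl rmorphD [ip z x](ip_sym hip) [ip z y](ip_sym hip). Qed.
Lemma ipZr a x z : ip z (a *: x) = a^* * ip z x.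
Proof. by rewrite (ip_sym hip) ipZl rmorphM [ip z x](ip_sym hip). Qed.
Lemma ipNl x z : ip (- x) z = - ip x z.
Proof. by rewrite -scaleN1r ipZl mulN1r. Qed.
Lemma ipNr x z : ip z (- x) = - ip z x.
Proof. by rewrite -scaleN1r ipZr rmorphN rmorph1 mulN1r. Qed.

Lemma ReM (t : R) (z : R[i]) : complex.Re (t%:C * z) = t * complex.Re z.
Proof. by case: z => a b /=; ring. Qed.
Lemma ReJ (z : R[i]) : complex.Re (z^*) = complex.Re z.
Proof. by case: z. Qed.

Lemma ReD (x y : R[i]) : complex.Re (x + y) = complex.Re x + complex.Re y.
Proof. by case: x; case: y. Qed.
Lemma ReN (x : R[i]) : complex.Re (- x) = - complex.Re x.
Proof. by case: x. Qed.
Lemma ReMJ (t : R) (z : R[i]) : complex.Re (t%:C^* * z) = t * complex.Re z.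
Proof. by case: z => a b /=; ring. Qed.

Definition rr x y := complex.Re (ip x y).

Lemma expand (t : R) u v :
  rr (t%:C *: u - v) (t%:C *: u - v) = t^+2 * rr u u - 2%:R * t * rr u v + rr v v.
Proof.
rewrite /rr ipDl !ipDr !ipZl !ipNl !ipNr (ipZr t%:C u u) (ipZr t%:C u v) (ip_sym hip v u).
by rewrite !ReD !ReN !ReM !ReMJ !ReN !ReJ; ring.
Qed.

Lemma rrZ (t : R) x : rr (t%:C *: x) (t%:C *: x) = t^+2 * rr x x.
Proof. by rewrite /rr ipZl (ipZr t%:C x x) ReM ReMJ; ring. Qed.

Lemma ip_def0 x : rr x x = 0 -> x = 0.
Proof.
move=> h; apply: (ip_def hip).
have := ip_sym hip x x; move: h; rewrite /rr; case: (ip x x) => a b /= -> [].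
move=> hb; have -> : b = 0 by lra. by [].
Qed.
End L.

Lemma sq_le (R : realType) (r e : R) : 0 <= e -> (Num.sqrt r <= e) = (r <= e ^+ 2).
Proof. by move=> he; rewrite -{1}(ger0_norm he) -sqrtr_sqr ler_sqrt // sqr_ge0. Qed.

Theorem mainTheorem5 (R : realType) (H : lmodType R[i]) (ip : H -> H -> R[i])
  (HH : sep_inf_dim_hilbert ip)
  (T : H -> H) (HT : bounded_operator ip T) (Hdense : dense_range ip T)
  (x0 : H) (hx0 : x0 != 0) (eps : R) (heps : 0 < eps) (heps' : eps < hnorm ip x0)
  (y0 : H) (hy0 : extremal_vector ip T x0 eps y0) :
  in_V ip x0 eps (T y0) /\
  (forall y : H, in_V ip x0 eps (T y) -> hnorm ip y0 <= hnorm ip y).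
Proof.
have hip := hs_ip HH.
case: HT => Tlin _.
have T0 : T 0 = 0.
  by have := Tlin (-1) 0 0; rewrite scaler0 addr0 scaleN1r addNr.
have TZ t x : T (t *: x) = t *: T x.
  by have := Tlin t x 0; rewrite addr0 T0 addr0.
have pos x : 0 <= rr ip x x := ip_pos hip x.
have he : 0 <= eps by exact: ltW.
case: hy0 => hy1 hymin.
split; last first.
  by move=> y [hy _]; apply: hymin; rewrite hy.
set a := rr ip (T y0) (T y0).
set b := rr ip x0 x0.
set c := rr ip (T y0) x0.
set n := rr ip y0 y0.
have ha : 0 <= a := pos _. have hb : 0 <= b := pos _. have hn : 0 <= n := pos _.
have ef t : rr ip ((t%:C) *: T y0 - x0) ((t%:C) *: T y0 - x0) = t ^+ 2 * a - 2%:R * t * c + b.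
  exact: (expand hip).
have f1E : rr ip (T y0 - x0) (T y0 - x0) = a - 2%:R * c + b.
  by have := ef 1; rewrite (_ : (1:R)%:C = 1) // scale1r => ->; ring.
have hf1 : a - 2%:R * c + b <= eps ^+ 2.
  by rewrite -f1E -sq_le.
have hbe : eps ^+ 2 < b.
  by move: heps'; rewrite /hnorm ltNge sq_le // -ltNge.
have key d : 0 < d -> d < 1 -> (1 - d) ^+ 2 * a - 2%:R * (1 - d) * c + b <= eps ^+ 2 -> False.
  move=> d0 d1 hd.
  have : hnorm ip y0 <= hnorm ip ((1 - d)%:C *: y0).
    apply: hymin; rewrite TZ /hnorm.
    by rewrite sq_le //; have := ef (1 - d); rewrite /rr => ->.
  rewrite /hnorm ler_sqrt ?pos //; have := rrZ hip (1 - d) y0; rewrite /rr => -> hle.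
  have n0 : n = 0.
    have hle' : n <= (1 - d) ^+ 2 * n by exact: hle.
    have hp : 0 < d * (2 - d) by apply: mulr_gt0; lra.
    have : n * (d * (2 - d)) <= 0 by nra.
    rewrite pmulr_lle0 // => hn0; lra.
  have y00 : y0 = 0 by apply: (ip_def0 hip).
  move: hf1; rewrite /a /c y00 T0 /rr !(ip0l hip) /=.
  move=> hh; lra.
have hfe : a - 2%:R * c + b = eps ^+ 2.
  apply/eqP; rewrite eq_le hf1 /= leNgt; apply/negP => hlt.
  set g := eps ^+ 2 - (a - 2%:R * c + b).
  set K := 2%:R * `|a - c| + a + 1.
  have hg : 0 < g by rewrite /g; lra.
  have hK : 0 < K by rewrite /K; have := normr_ge0 (a - c); lra.
  have hq : 0 < K + 2%:R * g by lra.
  set d := g / (K + 2%:R * g).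
  have hdq : d * (K + 2%:R * g) = g by rewrite /d divfK // gt_eqF.
  have d0 : 0 < d by rewrite /d divr_gt0.
  have d1 : d < 1.
    have e1 : (1 - d) * (K + 2%:R * g) = K + g by rewrite mulrBl hdq mul1r; ring.
    have : 0 < (1 - d) * (K + 2%:R * g) by rewrite e1; lra.
    by rewrite pmulr_lgt0 // subr_gt0.
  have hdK : d * K <= g.
    have : 0 < d * g by apply: mulr_gt0.
    move: hdq; rewrite mulrDr mulrCA => hdq'; lra.
  have hn1 : - (a - c) <= `|a - c| by rewrite -normrN ler_norm.
  apply: (key d d0 d1).
  have h1 : d ^+ 2 * a <= d * a.
    have : 0 <= d * ((1 - d) * a) by apply: mulr_ge0; [lra | apply: mulr_ge0; lra].
    have -> : d * a = d ^+ 2 * a + d * ((1 - d) * a) by ring.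
    lra.
  have h2 : d * (- (a - c)) <= d * `|a - c| by rewrite ler_pM2l.
  have -> : (1 - d) ^+ 2 * a - 2%:R * (1 - d) * c + b
     = (a - 2%:R * c + b) + 2%:R * (d * (- (a - c))) + d ^+ 2 * a by ring.
  have eK : d * K = 2%:R * (d * `|a - c|) + d * a + d by rewrite /K; ring.
  rewrite eK /g in hdK; lra.
have hac : a <= c.
  rewrite leNgt; apply/negP => hlt.
  set q := 2%:R * a + 2%:R * (a - c).
  have hq : 0 < q by rewrite /q; lra.
  set d := (a - c) / q.
  have hdq : d * q = a - c by rewrite /d divfK // gt_eqF.
  have d0 : 0 < d by rewrite /d divr_gt0 // subr_gt0.
  have hdq' : 2%:R * (d * a) + 2%:R * (d * (a - c)) = a - c by rewrite -[RHS]hdq /q; ring.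
  have hda : 0 <= d * a by rewrite mulr_ge0 // ltW.
  have hdc : 0 < d * (a - c) by rewrite mulr_gt0 // subr_gt0.
  have d1 : d < 1.
    rewrite -subr_gt0 -(pmulr_lgt0 _ (_ : 0 < a - c)); last by rewrite subr_gt0.
    have -> : (1 - d) * (a - c) = (a - c) - d * (a - c) by ring.
    lra.
  apply: (key d d0 d1).
  have h1 : d ^+ 2 * a <= d * a.
    have : 0 <= d * ((1 - d) * a) by apply: mulr_ge0; [lra | apply: mulr_ge0; lra].
    have -> : d * a = d ^+ 2 * a + d * ((1 - d) * a) by ring.
    lra.
  have h3 : d * (d * a) <= d * (a - c) by rewrite ler_pM2l //; lra.
  have -> : (1 - d) ^+ 2 * a - 2%:R * (1 - d) * c + b
     = (a - 2%:R * c + b) - 2%:R * (d * (a - c)) + d * (d * a) by ring.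
  lra.
split.
  rewrite /hnorm -/(rr ip _ _) f1E hfe sqrtr_sqr ger0_norm //.
rewrite /hnorm -/(rr ip _ _) -/(rr ip x0 x0) -/a -/b sqr_sqrtr // ler_sqrt; last lra.
lra.
Qed.
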